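(* Let $k>1$, let $f$ be a positive function, differentiable on $[0,1]$, and define $g(R)=\dfrac{k-1}{\frac{k-1}{k}-R}$ for $R\neq\frac{k-1}{k}$. Consider the planar system $$\frac{dI}{d\tau}=I\,[f(R)(1-I-R)-k],\qquad \frac{dR}{d\tau}=(k-1)I-R,$$ and let $(I^*,R^* )$ be an endemic equilibrium of it such that $\frac{df}{dR}(R^* )\neq\frac{dg}{dR}(R^* )$. Then either $(I^*,R^* )$ is locally stable, or there exists another endemic equilibrium point $(\overline{I}^*,\overline{R}^* )$ with $\overline{R}^*>R^*$.
   Context: An endemic equilibrium is an equilibrium point $(I^*,R^* )$ of the system with $I^*>0$. ''Locally stable'' means locally asymptotically stable (both eigenvalues of the Jacobian at the point have negative real part). *)

(* Defs.v *)
From Stdlib Require Import Reals Lra.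
From Coquelicot Require Import Coquelicot.
Open Scope R_scope.

Definition F1 (k : R) (f : R -> R) (I Rv : R) : R := I * (f Rv * (1 - I - Rv) - k).
Definition F2 (k : R) (I Rv : R) : R := (k - 1) * I - Rv.

Definition g (k : R) (Rv : R) : R := (k - 1) / ((k - 1) / k - Rv).

Definition is_equilibrium (k : R) (f : R -> R) (I Rv : R) : Prop :=
  F1 k f I Rv = 0 /\ F2 k I Rv = 0.

Definition is_endemic_equilibrium (k : R) (f : R -> R) (I Rv : R) : Prop :=
  is_equilibrium k f I Rv /\ 0 < I.

Definition J11 k f I Rv := Derive (fun x => F1 k f x Rv) I.
Definition J12 k f I Rv := Derive (fun y => F1 k f I y) Rv.
Definition J21 k I Rv := Derive (fun x => F2 k x Rv) I.
Definition J22 k I Rv := Derive (fun y => F2 k I y) Rv.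

Definition is_eigenvalue2 (a b c d : R) (z : C) : Prop :=
  ((RtoC a - z) * (RtoC d - z) - RtoC b * RtoC c)%C = RtoC 0.

Definition locally_stable (k : R) (f : R -> R) (I Rv : R) : Prop :=
  forall z : C,
    is_eigenvalue2 (J11 k f I Rv) (J12 k f I Rv) (J21 k I Rv) (J22 k I Rv) z ->
    Re z < 0.

(* Main.v *)
Require Import Defs.
From Stdlib Require Import Reals.
From Coquelicot Require Import Coquelicot.
From Stdlib Require Import Lra Psatz Ranalysis5.
Open Scope R_scope.

Lemma eig_neg (a b c d : R) (z : C) :
  a + d < 0 -> a * d - b * c > 0 -> is_eigenvalue2 a b c d z -> Re z < 0.
Proof.
  destruct z as [x y]; unfold is_eigenvalue2; intros HT HD E.
  pose proof (f_equal fst E) as E1; pose proof (f_equal snd E) as E2.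
  unfold Cminus, Cmult, Cplus, Copp, RtoC in E1, E2; simpl in E1, E2; simpl.
  assert (Hy : y * (2 * x - (a + d)) = 0) by nra.
  destruct (Rmult_integral _ _ Hy) as [Hy0|Hx].
  - subst y. nra.
  - lra.
Qed.

Lemma cont_of_exd (f : R -> R) x : ex_derive f x -> continuity_pt f x.
Proof.
  intros [l Hl]. apply derivable_continuous_pt.
  exists l. now apply is_derive_Reals.
Qed.

Theorem proposition1 (k : R) (f : R -> R) (Istar Rstar : R) :
  1 < k ->
  (forall x, 0 < f x) ->
  (forall x, 0 <= x <= 1 -> ex_derive f x) ->
  is_endemic_equilibrium k f Istar Rstar ->
  Derive f Rstar <> Derive (g k) Rstar ->
  locally_stable k f Istar Rstar \/
  exists Ibar Rbar, is_endemic_equilibrium k f Ibar Rbar /\ Rstar < Rbar.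
Proof.
  intros hk hf hd [[E1 E2] HI] Hne.
  unfold F1 in E1; unfold F2 in E2.
  assert (HR : Rstar = (k - 1) * Istar) by lra.
  assert (E1' : f Rstar * (1 - Istar - Rstar) = k).
  { destruct (Rmult_integral _ _ E1) as [H|H]; lra. }
  pose proof (hf Rstar) as fpos.
  assert (Hpos : 0 < 1 - k * Istar).
  { assert (0 < 1 - Istar - Rstar).
    { destruct (Rlt_or_le 0 (1 - Istar - Rstar)) as [H|H]; auto. nra. }
    nra. }
  set (c := (k - 1) / k).
  set (u := c - Rstar).
  assert (Hu : u = (k - 1) * (1 - k * Istar) / k) by (unfold u, c; rewrite HR; field; lra).
  assert (upos : 0 < u).
  { rewrite Hu. apply Rdiv_lt_0_compat; nra. }
  assert (fu : f Rstar * u = k - 1).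
  { assert (E2' : f Rstar * (1 - k * Istar) = k).
    { assert (1 - Istar - Rstar = 1 - k * Istar) as Hq by lra. rewrite <- Hq. exact E1'. }
    rewrite Hu. replace (f Rstar * ((k - 1) * (1 - k * Istar) / k)) with
      ((f Rstar * (1 - k * Istar)) * (k - 1) / k) by (field; lra).
    rewrite E2'. field; lra. }
  assert (R01 : 0 <= Rstar <= 1).
  { split; [nra|]. assert (c < 1) by (unfold c; apply Rlt_div_l; lra).
    unfold u in upos; lra. }
  destruct (hd Rstar R01) as [fp Hfp].
  assert (Dfp : Derive f Rstar = fp) by now apply is_derive_unique.
  set (gp := (k - 1) / (u * u)).
  assert (Dg : Derive (g k) Rstar = gp).
  { apply is_derive_unique. unfold g. auto_derive.
    - unfold u, c in upos; lra.
    - assert (Hk : k - 1 - Rstar * k = u * k) by (unfold u, c; field; lra).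
      unfold gp, u, c in *. field. split; [lra|]. rewrite Hk. nra. }
  assert (J1 : J11 k f Istar Rstar = - Istar * f Rstar).
  { unfold J11, F1. apply is_derive_unique. auto_derive; auto; try lra. }
  assert (J2 : J12 k f Istar Rstar = Istar * (fp * (1 - Istar - Rstar) - f Rstar)).
  { unfold J12, F1. apply is_derive_unique. auto_derive.
    - exists fp; exact Hfp.
    - replace (Derive (fun x : R => f x) Rstar) with fp by (symmetry; exact Dfp). ring. }
  assert (J3 : J21 k Istar Rstar = k - 1).
  { unfold J21, F2. apply is_derive_unique. auto_derive; auto; ring. }
  assert (J4 : J22 k Istar Rstar = -1).
  { unfold J22, F2. apply is_derive_unique. auto_derive; auto; ring. }
  rewrite Dfp, Dg in Hne.
  destruct (Rlt_or_le fp gp) as [Hlt|Hge].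
  - left. intros z Hz.
    rewrite J1, J2, J3, J4 in Hz. revert Hz; apply eig_neg.
    + nra.
    + assert (Hku : (k - 1) * (1 - Istar - Rstar) = k * u).
      { rewrite Hu. field_simplify; [|lra]. rewrite HR. ring. }
      assert (Hfu : fp * u < f Rstar).
      { assert (fp * (u * u) < k - 1).
        { unfold gp in Hlt. apply Rlt_div_r in Hlt; [lra|nra]. }
        nra. }
      replace (- Istar * f Rstar * -1 - Istar * (fp * (1 - Istar - Rstar) - f Rstar) * (k - 1))
        with (Istar * k * (f Rstar - fp * u))
        by (replace (Istar * (fp * (1 - Istar - Rstar) - f Rstar) * (k - 1))
             with (Istar * (fp * ((k - 1) * (1 - Istar - Rstar)) - (k - 1) * f Rstar)) by ring;
            rewrite Hku; ring).
      apply Rmult_lt_0_compat; [nra|lra].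
  - right.
    assert (Hgt : gp < fp) by lra.
    assert (Hc1 : c < 1) by (unfold c; apply Rlt_div_l; lra).
    assert (Hc : Rstar < c) by (unfold u in upos; lra).
    assert (exd_g : forall x, x < c -> ex_derive (g k) x).
    { intros x Hx. unfold g. auto_derive. fold c; lra. }
    assert (Hg : is_derive (g k) Rstar gp).
    { rewrite <- Dg. apply Derive_correct. apply exd_g; lra. }
    set (h := fun x => g k x - f x).
    assert (Hh : derivable_pt_lim h Rstar (gp - fp)).
    { apply is_derive_Reals. exact (is_derive_minus _ _ _ _ _ Hg Hfp). }
    assert (h0 : h Rstar = 0).
    { unfold h, g. fold c. fold u. rewrite <- fu. field. lra. }
    assert (contf : forall x, Rstar <= x < c -> continuity_pt h x).
    { intros x Hx. apply continuity_pt_minus.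
      - apply cont_of_exd. apply exd_g. lra.
      - apply cont_of_exd. apply hd. lra. }
    destruct (Hh ((fp - gp) / 2)) as [delta Hdel]; [lra|].
    set (d := Rmin (delta / 2) (u / 2)).
    assert (dpos : 0 < d).
    { unfold d. apply Rmin_pos; pose proof (cond_pos delta); lra. }
    assert (dle1 : d <= delta / 2) by apply Rmin_l.
    assert (dle2 : d <= u / 2) by apply Rmin_r.
    set (p := Rstar + d).
    assert (hp : h p < 0).
    { assert (Hd := Hdel d ltac:(lra) ltac:(rewrite Rabs_pos_eq; pose proof (cond_pos delta); lra)).
      rewrite h0 in Hd. apply Rabs_def2 in Hd. destruct Hd as [Hd _].
      assert (Hq : (h (Rstar + d) - 0) / d < 0) by lra.
      assert (Hq2 : h (Rstar + d) - 0 < 0 * d).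
      { apply Rlt_div_l; auto. }
      unfold p. lra. }
    assert (Hpc : p < c) by (unfold p, u in *; lra).
    destruct (continuity_ab_maj f Rstar c) as [Mx [HM HMx]]; [lra| |].
    { intros x Hx. apply cont_of_exd. apply hd. lra. }
    set (M := f Mx). assert (Mpos : 0 < M) by apply hf.
    set (t := Rmin ((c - p) / 2) ((k - 1) / (M + 1))).
    assert (tpos : 0 < t).
    { unfold t. apply Rmin_pos; [lra|apply Rdiv_lt_0_compat; lra]. }
    assert (tle1 : t <= (c - p) / 2) by apply Rmin_l.
    assert (tle2 : t <= (k - 1) / (M + 1)) by apply Rmin_r.
    set (q := c - t).
    assert (hq : 0 < h q).
    { unfold h. assert (g k q = (k - 1) / t) by (unfold g, q; fold c; f_equal; ring).
      rewrite H.
      assert (M + 1 <= (k - 1) / t).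
      { apply Rle_div_r; auto. apply Rle_div_r in tle2; [|lra]. lra. }
      assert (f q <= M) by (apply HM; unfold q, p in *; lra). lra. }
    destruct (IVT_interv h p q) as [zz [Hz1 Hz2]].
    { intros a Ha. apply contf. unfold q, p in *; lra. }
    { unfold q; lra. }
    { exact hp. }
    { exact hq. }
    assert (zc : zz < c) by (unfold q in Hz1; lra).
    assert (zR : Rstar < zz) by (unfold p in Hz1; lra).
    assert (fz : f zz = (k - 1) / (c - zz)).
    { unfold h, g in Hz2. fold c in Hz2. lra. }
    exists (zz / (k - 1)), zz. split; [|exact zR].
    split; [split|].
    + unfold F1. rewrite fz.
      replace (1 - zz / (k - 1) - zz) with (k * (c - zz) / (k - 1))
        by (unfold c; field; lra).
      field_simplify; try lra.
    + unfold F2. field. lra.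
    + apply Rdiv_lt_0_compat; lra.
Qed.
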